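(* Let $n\ge1$, $N=\{1,\dots,n\}$, $A=(a_{ij})\in[0,1]^{n\times n}$, $b=(b_1,\dots,b_n)$ with $b_i>0$, and assume $\check\alpha_j\le 1$ for all $j\in N$. Let $\lambda\in[0,+\infty)$ and $x=(x_1,\dots,x_n)\in[0,1]^n$. Then $x\in V^*(A,\lambda)$ if and only if there exists $p=(p_1,\dots,p_n)\in P$ such that $$\begin{cases} x_j=d_{0j}=1 & \text{for all } j\in N^*,\\ d_{(p_j-1)j}\le x_j\le d_{p_jj} & \text{for all } j\in N\setminus N^*,\\ \sum_{j\in N^*}a_{ij}+\sum_{j\in N\setminus N^*}\big[\gamma_{ij}\,x_j+(1-\gamma_{ij})\,a_{ij}\big]\ge b_i & \text{for all } i\in N,\\ \sum_{j\in N^*}a_{ij}+\sum_{j\in N\setminus N^*}\big[\gamma_{ij}\,x_j+(1-\gamma_{ij})\,a_{ij}\big]=\lambda x_i & \text{for all } i\in N,\end{cases}$$ where $\gamma_{ij}$ (depending on $p$) is as defined in the context.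
   Context: $\theta=(0,\dots,0)$. For $x\in[0,1]^n$, write $(A\odot x^T)_i=\sum_{j\in N}\min\{a_{ij},x_j\}$ (ordinary addition). $V^*(A,\lambda)=\{x\in[0,1]^n: (A\odot x^T)_i\ge b_i \text{ and } (A\odot x^T)_i=\lambda x_i \text{ for all } i\in N,\ x\neq\theta\}$ (constrained eigenvectors). Let $\check\alpha_j=\max\big(\{0\}\cup\{b_i-\sum_{k\in N\setminus\{j\}}a_{ik}: i\in N\}\big)$. For $j\in N$, let $D_j=\{d_{0j}<d_{1j}<\dots<d_{l_jj}\}$ be the set $\{\check\alpha_j\}\cup\{a_{ij}: i\in N,\ a_{ij}\ge\check\alpha_j\}\cup\{1\}$ listed increasingly, so $d_{0j}=\check\alpha_j$, $d_{l_jj}=1$, each $d_{pj}$ with $0<p<l_j$ is some $a_{ij}$, and every $a_{ij}\ge\check\alpha_j$ equals some $d_{pj}$. Let $N^*=\{j\in N:\check\alpha_j=1\}$; let $P_j=\{0\}$ if $j\in N^*$ and $P_j=\{p: d_{pj}\in D_j,\ d_{pj}>\check\alpha_j\}=\{1,\dots,l_j\}$ if $j\in N\setminus N^*$; $P=P_1\times\dots\times P_n$. For $p\in P$, $i\in N$, $j\in N\setminus N^*$: $\gamma_{ij}=1$ if $d_{p_jj}\le a_{ij}$ and $\gamma_{ij}=0$ if $a_{ij}\le d_{(p_j-1)j}$. *)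

(* Defs.v *)
From HB Require Import structures.
From mathcomp Require Import all_boot all_order all_algebra.
Set Implicit Arguments. Unset Strict Implicit. Unset Printing Implicit Defensive.
Import Order.TTheory GRing.Theory Num.Theory.
Local Open Scope ring_scope.

Section MaxMin.
Variables (R : realFieldType) (n : nat).
Implicit Types (A : 'M[R]_n) (b x : 'I_n -> R) (j : 'I_n).

Definition maxmin A x (i : 'I_n) : R := \sum_(j < n) Num.min (A i j) (x j).

Definition Vstar A b (lam : R) (x : 'I_n -> R) : Prop :=
  (forall j, 0 <= x j <= 1) /\
  (forall i, b i <= maxmin A x i) /\
  (forall i, maxmin A x i = lam * x i) /\
  (exists j, x j != 0).

Definition alpha_chk A b j : R :=
  \big[Num.max/0]_(i < n) (b i - \sum_(k < n | k != j) A i k).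

Definition Dseq A b j : seq R :=
  sort <=%R (undup (alpha_chk A b j ::
     rcons [seq A i j | i <- enum 'I_n & alpha_chk A b j <= A i j] 1)).

Definition d A b j (p : nat) : R := nth 0 (Dseq A b j) p.

Definition l_ A b j : nat := (size (Dseq A b j)).-1.

Definition Nstar A b j : bool := alpha_chk A b j == 1.

Definition inP A b (p : 'I_n -> nat) : Prop :=
  forall j, if Nstar A b j then p j = 0%N else (1 <= p j <= l_ A b j)%N.

(* gamma_ij = 1 if d_{p_j j} <= a_ij, 0 if a_ij <= d_{(p_j-1) j}
   (these cases are exhaustive and exclusive) *)
Definition gamma A b (p : 'I_n -> nat) (i j : 'I_n) : R :=
  if d A b j (p j) <= A i j then 1 else 0.

Definition lin_form A b p x (i : 'I_n) : R :=
  \sum_(j < n | Nstar A b j) A i j +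
  \sum_(j < n | ~~ Nstar A b j) (gamma A b p i j * x j + (1 - gamma A b p i j) * A i j).

End MaxMin.

(* Main.v *)
Require Import Defs.
From HB Require Import structures.
From mathcomp Require Import all_boot all_order all_algebra.
Import Order.TTheory GRing.Theory Num.Theory.
Local Open Scope ring_scope.

Section Aux.
Variables (R : realFieldType) (n : nat) (A : 'M[R]_n) (b : 'I_n -> R) (j : 'I_n).
Hypothesis HA : forall i j, 0 <= A i j <= 1.
Hypothesis Hal : alpha_chk A b j <= 1.

Lemma Dmem y : (y \in Dseq A b j) =
  [|| y == alpha_chk A b j, y == 1 | y \in [seq A i j | i <- enum 'I_n & alpha_chk A b j <= A i j]].
Proof.
rewrite /Dseq mem_sort mem_undup in_cons mem_rcons in_cons.
by [].
Qed.

Lemma Dbounds y : y \in Dseq A b j -> alpha_chk A b j <= y <= 1.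
Proof.
rewrite Dmem => /or3P[/eqP->|/eqP->|]; first by rewrite lexx Hal.
  by rewrite Hal lexx.
case/mapP => i; rewrite mem_filter => /andP[Hi _] ->.
by rewrite Hi; case/andP: (HA i j).
Qed.

Lemma Dsorted : sorted <=%R (Dseq A b j).
Proof. by apply: sort_sorted; exact: le_total. Qed.

Lemma Dmono k1 k2 : (k1 <= k2)%N -> (k2 < size (Dseq A b j))%N ->
  d A b j k1 <= d A b j k2.
Proof.
move=> H12 H2; apply: (sorted_leq_nth le_trans lexx 0 Dsorted) => //=.
exact: leq_ltn_trans H2.
Qed.

Lemma Dalpha : alpha_chk A b j \in Dseq A b j.
Proof. by rewrite Dmem eqxx. Qed.

Lemma Done : 1 \in Dseq A b j.
Proof. by rewrite Dmem eqxx orbT. Qed.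

Lemma DA i : alpha_chk A b j <= A i j -> A i j \in Dseq A b j.
Proof.
move=> H; rewrite Dmem; apply/or3P; apply: Or33; apply/mapP; exists i => //.
by rewrite mem_filter H mem_enum.
Qed.

Lemma Dsize : (0 < size (Dseq A b j))%N.
Proof. by have := Dalpha; case: (Dseq A b j). Qed.

Lemma d0 : d A b j 0 = alpha_chk A b j.
Proof.
apply/eqP; rewrite eq_le; apply/andP; split.
  rewrite -[X in _ <= X](nth_index 0 Dalpha); apply: Dmono => //; by rewrite index_mem Dalpha.
by case/andP: (Dbounds _ (mem_nth (0:R) Dsize)).
Qed.

Lemma dl : d A b j (l_ A b j) = 1.
Proof.
have Hs : (l_ A b j < size (Dseq A b j))%N by rewrite /l_ prednK // Dsize.
apply/eqP; rewrite eq_le; apply/andP; split.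
  by case/andP: (Dbounds _ (mem_nth (0:R) Hs)).
rewrite -[X in X <= _](nth_index 0 Done); apply: Dmono => //.
by rewrite /l_ -ltnS prednK ?Dsize // index_mem Done.
Qed.

Lemma lpos : alpha_chk A b j != 1 -> (1 <= l_ A b j)%N.
Proof.
move=> H; rewrite lt0n; apply: contra H => /eqP H0.
by rewrite -d0 -H0 dl.
Qed.

Lemma minform (p : nat) (xj : R) (i : 'I_n) :
  (1 <= p)%N -> (p <= l_ A b j)%N ->
  d A b j p.-1 <= xj <= d A b j p ->
  Num.min (A i j) xj =
  (if d A b j p <= A i j then 1 else 0) * xj + (1 - (if d A b j p <= A i j then 1 else 0)) * A i j.
Proof.
move=> H1 Hl /andP[Hlo Hhi].
have Hs : (p < size (Dseq A b j))%N by apply: leq_ltn_trans Hl _; rewrite /l_ prednK // Dsize.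
case: ifP => Hd.
  by rewrite mul1r subrr mul0r addr0 min_r // (le_trans Hhi Hd).
rewrite mul0r add0r subr0 mul1r min_l //.
case: (leP (alpha_chk A b j) (A i j)) => Ha.
  have Hin := DA i Ha.
  rewrite -(nth_index 0 Hin); apply: le_trans Hlo.
  have Hk : (index (A i j) (Dseq A b j) < p)%N.
    rewrite ltnNge; apply/negP => Hk.
    move: Hd; rewrite -[X in _ <= X](nth_index 0 Hin) Dmono //.
    by rewrite index_mem.
  apply: Dmono; first by rewrite -ltnS prednK.
  by apply: leq_ltn_trans Hs; apply: leq_pred.
apply: le_trans (ltW Ha) _; rewrite -d0; apply: le_trans Hlo.
apply: Dmono => //; by apply: leq_ltn_trans Hs; apply: leq_pred.
Qed.

End Aux.
Arguments minform {R n A b j}.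
Arguments lpos {R n A b j}.
Arguments d0 {R n A b j}.
Arguments Dsize {R n A b j}.
Arguments Dmono {R n A b j}.
Arguments Done {R n A b j}.

Lemma maxmin_lin (R : realFieldType) (n : nat) (A : 'M[R]_n) (b : 'I_n -> R)
  (p : 'I_n -> nat) (x : 'I_n -> R) (i : 'I_n) :
  (forall i j, 0 <= A i j <= 1) ->
  (forall j, alpha_chk A b j <= 1) ->
  (forall j, Nstar A b j -> x j = 1) ->
  (forall j, ~~ Nstar A b j -> [/\ (1 <= p j)%N, (p j <= l_ A b j)%N &
        d A b j (p j).-1 <= x j <= d A b j (p j)]) ->
  maxmin A x i = lin_form A b p x i.
Proof.
move=> HA Hal HN HnN.
rewrite /maxmin /lin_form (bigID (Nstar A b)) /=; congr (_ + _).
  apply: eq_bigr => j Hj; rewrite HN // min_l //; by case/andP: (HA i j).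
apply: eq_bigr => j Hj; case: (HnN j Hj) => H1 H2 H3.
by rewrite (minform HA (Hal j) _ _ i H1 H2 H3).
Qed.

Lemma alpha_le (R : realFieldType) (n : nat) (A : 'M[R]_n) (b : 'I_n -> R)
  (x : 'I_n -> R) (j : 'I_n) :
  (forall i j, 0 <= A i j <= 1) ->
  (forall j, 0 <= x j <= 1) ->
  (forall i, b i <= maxmin A x i) -> alpha_chk A b j <= x j.
Proof.
move=> HA Hx Hb; rewrite /alpha_chk.
elim/big_ind: _ => //.
- by case/andP: (Hx j).
- by move=> u v Hu Hv; rewrite ge_max Hu Hv.
move=> i _; rewrite lerBlDr; apply: le_trans (Hb i) _.
rewrite /maxmin (bigD1 j) //= lerD //; first by rewrite ge_min lexx orbT.
apply: ler_sum => k _; by rewrite ge_min lexx.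
Qed.

Theorem theorem4p1 (R : realFieldType) (n : nat) (A : 'M[R]_n) (b : 'I_n -> R)
  (lam : R) (x : 'I_n -> R) :
  (0 < n)%N ->
  (forall i j, 0 <= A i j <= 1) ->
  (forall i, 0 < b i) ->
  (forall j, alpha_chk A b j <= 1) ->
  0 <= lam ->
  (forall j, 0 <= x j <= 1) ->
  (Vstar A b lam x <->
   exists p : 'I_n -> nat, inP A b p /\
     (forall j, Nstar A b j -> x j = d A b j 0 /\ d A b j 0 = 1) /\
     (forall j, ~~ Nstar A b j -> d A b j (p j).-1 <= x j <= d A b j (p j)) /\
     (forall i, b i <= lin_form A b p x i) /\
     (forall i, lin_form A b p x i = lam * x i)).
Proof.
move=> Hn HA Hbpos Hal Hlam Hx; split.
  case=> _ [Hb [Heq _]].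
  have Hxa := fun j => @alpha_le _ _ A b x j HA Hx Hb.
  pose k j := find (fun y => x j <= y) (Dseq A b j).
  pose p j := if Nstar A b j then 0%N else if k j == 0%N then 1%N else k j.
  have HN : forall j, Nstar A b j -> x j = 1.
    move=> j /eqP Hj; apply/eqP; rewrite eq_le; case/andP: (Hx j) => _ -> /=.
    by rewrite -Hj Hxa.
  have HnN : forall j, ~~ Nstar A b j -> [/\ (1 <= p j)%N, (p j <= l_ A b j)%N &
        d A b j (p j).-1 <= x j <= d A b j (p j)].
    move=> j Hj; have Hl := lpos HA (Hal j) Hj.
    have Hsz : size (Dseq A b j) = (l_ A b j).+1 by rewrite /l_ prednK // Dsize.
    have Hhas : has (fun y => x j <= y) (Dseq A b j).
      by apply/hasP; exists 1; [exact: Done | case/andP: (Hx j)].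
    have Hk : (k j < size (Dseq A b j))%N by rewrite -has_find.
    have Hkx : x j <= d A b j (k j) := nth_find 0 Hhas.
    rewrite /p (negbTE Hj); case: eqP => Hk0.
      split => //; rewrite /= (d0 HA (Hal j)) Hxa /=.
      apply: le_trans Hkx _; rewrite Hk0; apply: Dmono => //; by rewrite Hsz.
    split; [by rewrite lt0n; apply/eqP | by rewrite -ltnS -Hsz |].
    rewrite Hkx andbT.
    have := @before_find _ 0 (fun y => x j <= y) (Dseq A b j) (k j).-1.
    rewrite prednK ?lt0n; last by apply/eqP.
    by move/(_ (leqnn _)) => /negbT; rewrite -ltNge => /ltW.
  have Hmm : forall i, maxmin A x i = lin_form A b p x i by move=> i; exact: maxmin_lin.
  exists p; split; [|split; [|split; [|split]]].
  - move=> j; case: ifP => Hj; first by rewrite /p Hj.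
    by case: (HnN j); rewrite ?Hj // => -> ->.
  - move=> j Hj; rewrite HN // d0 //; by move/eqP: Hj.
  - by move=> j Hj; case: (HnN j Hj).
  - by move=> i; rewrite -Hmm.
  - by move=> i; rewrite -Hmm.
case=> p [HP [HN [Hbr [Hb Heq]]]].
have Hmm : forall i, maxmin A x i = lin_form A b p x i.
  move=> i; apply: maxmin_lin => // j Hj.
    by case: (HN j Hj) => -> ->.
  by move: (HP j); rewrite (negbTE Hj) => /andP[H1 H2]; split => //; exact: Hbr.
split => //; split; first by move=> i; rewrite Hmm.
split; first by move=> i; rewrite Hmm.
case: (pickP (fun j => x j != 0)) => [j Hj | H]; first by exists j.
exfalso; pose i0 := Ordinal Hn.
have : b i0 <= maxmin A x i0 by rewrite Hmm.
have -> : maxmin A x i0 = 0.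
  rewrite /maxmin big1 // => j _; move/negbFE/eqP: (H j) => ->.
  by rewrite min_r //; case/andP: (HA i0 j).
by rewrite leNgt Hbpos.
Qed.
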